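(* Let $n$ be a positive integer with $n\equiv 2 \pmod 3$. Then the $(3,n;6)$-bipartite biregular cage has exactly $2+2n+\frac{(2+2n)n}{3}$ vertices, and every $(3,n;6)$-bipartite biregular cage is (isomorphic to) the incidence graph of the structure obtained from a Steiner triple system on $2n+3$ points by deleting one point and all triples containing it.
   Context: For integers $a,b\geq 2$ and even $g\ge 4$, an $(a,b;g)$-bipartite biregular graph is a finite simple bipartite graph of girth exactly $g$ in which all vertices of one bipartition class have degree $a$ and all vertices of the other class have degree $b$. An $(a,b;g)$-bipartite biregular cage is such a graph of minimum possible order. A Steiner triple system on $v$ points is a set of $v$ points with a family of 3-element subsets (triples) such that every pair of distinct points lies in exactly one triple. The incidence graph of a point-triple structure is the bipartite graph on points and triples with a point adjacent to a triple iff the point lies in it. *)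

(* Defs.v *)
From mathcomp Require Import all_boot.
Set Implicit Arguments. Unset Strict Implicit. Unset Printing Implicit Defensive.

Definition simple_graph (V : finType) (e : rel V) : Prop :=
  irreflexive e /\ symmetric e.

Definition girth_eq (V : finType) (e : rel V) (g : nat) : Prop :=
  (exists c : seq V, [/\ ucycle e c, 3 <= size c & size c = g]) /\
  (forall c : seq V, ucycle e c -> 3 <= size c -> g <= size c).

Definition deg (V : finType) (e : rel V) (x : V) : nat := #|[set y | e x y]|.

Definition bb_graph (a b g : nat) (V : finType) (e : rel V) : Prop :=
  [/\ simple_graph e,
      exists A : {set V},
        [/\ forall x y, e x y -> (x \in A) != (y \in A),
            forall x, x \in A -> deg e x = a &
            forall x, x \notin A -> deg e x = b]
    & girth_eq e g].

Definition bb_cage (a b g : nat) (V : finType) (e : rel V) : Prop :=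
  bb_graph a b g e /\
  (forall (W : finType) (f : rel W), bb_graph a b g f -> #|V| <= #|W|).

Definition STS (v : nat) (B : {set {set 'I_v}}) : Prop :=
  (forall T, T \in B -> #|T| = 3) /\
  (forall x y : 'I_v, x != y -> #|[set T in B | (x \in T) && (y \in T)]| = 1).

Definition inc_rel (v : nat) : rel ('I_v + {set 'I_v}) :=
  fun u w => match u, w with
             | inl p, inr T => p \in T
             | inr T, inl p => p \in T
             | _, _ => false
             end.

Definition derived_vertices (v : nat) (B : {set {set 'I_v}}) (x0 : 'I_v)
  : {set ('I_v + {set 'I_v})} :=
  [set u | match u with
           | inl p => p != x0
           | inr T => (T \in B) && (x0 \notin T)
           end].

Definition iso_induced (V W : finType) (e : rel V) (f : rel W) (S : {set W}) : Prop :=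
  exists h : V -> W,
    [/\ injective h, h @: [set: V] = S & forall x y, e x y = f (h x) (h y)].

(* Main.v *)
Require Import Defs.
From mathcomp Require Import all_boot zify.
Set Implicit Arguments. Unset Strict Implicit. Unset Printing Implicit Defensive.

Lemma cards3 (T : finType) (x y z : T) : x != y -> x != z -> y != z -> #|[set x; y; z]| = 3.
Proof.
move=> xy xz yz; rewrite -setUA cardsU1 cards2 yz !inE negb_or xy xz.
done.
Qed.

Section Gen.
Variables (V : finType) (e : rel V) (A : {set V}).
Hypothesis esym : symmetric e.
Hypothesis eirr : irreflexive e.
Hypothesis cross : forall x y, e x y -> (x \in A) != (y \in A).
Hypothesis degA : forall x, x \in A -> deg e x = 3.
Hypothesis c4 : forall u w x y, u != w -> x != y -> e u x -> e w x -> e u y -> e w y -> False.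

Definition Nb (x : V) := [set y | e x y].
Definition N2 (p : V) := [set q | (q != p) && [exists a, e p a && e a q]].

Lemma N2card p : p \notin A -> #|N2 p| = 2 * deg e p.
Proof.
move=> pA.
pose P := [set Nb a :\ p | a in Nb p].
have cardN a : a \in Nb p -> #|Nb a :\ p| = 2.
  rewrite inE => epa.
  have aA : a \in A by move: (cross epa); rewrite (negbTE pA); case: (a \in A).
  have := degA aA; rewrite /deg (cardsD1 p) inE (esym a p) epa.
  by rewrite /Nb /= add1n => -[].
have disj a b : a \in Nb p -> b \in Nb p -> a != b ->
   [disjoint Nb a :\ p & Nb b :\ p].
  rewrite !inE => epa epb ab; apply/pred0P => q /=; rewrite !inE.
  apply/negP => /andP[/andP[qp eaq] /andP[_ ebq]].
  apply: (c4 (u:=a) (w:=b) (x:=p) (y:=q)) => //; first by rewrite eq_sym.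
  by rewrite esym. by rewrite esym.
have inj : {in Nb p &, injective (fun a => Nb a :\ p)}.
  move=> a b ha hb eqab; apply/eqP; apply/negP => /negP ab.
  have := disj a b ha hb ab; rewrite eqab => /disjoint_setI0; rewrite setIid => h.
  by move: (cardN b hb); rewrite h cards0.
have -> : N2 p = cover P.
  apply/setP => q; rewrite /cover /P inE; apply/andP/bigcupP.
    case=> qp /existsP[a /andP[epa eaq]]; exists (Nb a :\ p).
      by apply/imsetP; exists a; rewrite ?inE.
    by rewrite !inE qp eaq.
  case=> B /imsetP[a ha ->]; rewrite !inE => /andP[qp eaq]; split=> //.
  by apply/existsP; exists a; rewrite eaq andbT; move: ha; rewrite inE.
rewrite (@card_uniform_partition _ 2 P (cover P)).
- by rewrite card_in_imset // mulnC.
- by move=> B /imsetP[a ha ->]; apply: cardN.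
apply/and3P; split=> //.
  apply/trivIsetP => B C /imsetP[a ha ->] /imsetP[b hb ->] neq.
  apply: disj => //; apply/negP => /eqP ab; move: neq; by rewrite ab eqxx.
apply/imsetP => -[a ha h]; move: (cardN a ha); by rewrite -h cards0.
Qed.

Lemma cardN p a : p \notin A -> e p a -> #|Nb a :\ p| = 2.
Proof.
move=> pA epa.
have aA : a \in A by move: (cross epa); rewrite (negbTE pA); case: (a \in A).
have := degA aA; rewrite /deg (cardsD1 p) inE (esym a p) epa.
by rewrite /Nb /= add1n => -[].
Qed.

Lemma nbA p a : p \notin A -> e p a -> a \in A.
Proof. by move=> pA epa; move: (cross epa); rewrite (negbTE pA); case: (a \in A). Qed.

Lemma nbnA p a : p \in A -> e p a -> a \notin A.
Proof. by move=> pA epa; move: (cross epa); rewrite pA; case: (a \in A). Qed.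

Lemma path_par x s : path e x s -> (last x s \in A) = (x \in A) (+) odd (size s).
Proof.
elim: s x => [|y s IH] x /=; first by rewrite addbF.
move=> /andP[exy /IH ->]; move: (cross exy).
by case: (x \in A); case: (y \in A); case: (odd (size s)).
Qed.

Lemma cycle_even c : cycle e c -> ~~ odd (size c).
Proof.
case: c => [|x s] //= /path_par; rewrite last_rcons size_rcons /=.
by case: (x \in A); case: (odd (size s)).
Qed.

Lemma ucycle_ge6 c : ucycle e c -> 3 <= size c -> 6 <= size c.
Proof.
move=> /andP[cy un] c3; have ev := cycle_even cy.
case: c cy un c3 ev => [|a [|b [|c' [|d [|x [|y s]]]]]] //=.
- move=> /and5P[eab ebc ecd eda _]; rewrite !inE !negb_or => /and4P[/and3P[ab ac ad] /andP[bc bd] _ _] _ _.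
  exfalso; apply: (c4 (u:=a) (w:=c') (x:=b) (y:=d)) => //; by rewrite esym.
Qed.

Lemma degE x : deg e x = \sum_y (e x y : nat).
Proof.
rewrite /deg -sum1_card big_mkcond /=; apply: eq_bigr => y _.
by rewrite inE; case: (e x y).
Qed.

Lemma dcount : \sum_(a in A) deg e a = \sum_(b in ~:A) deg e b.
Proof.
have L a : a \in A -> deg e a = \sum_(b in ~:A) (e a b : nat).
  move=> aA; rewrite degE [RHS]big_mkcond /=; apply: eq_bigr => y _.
  rewrite inE; case eay: (e a y); last by case: (y \in A).
  by rewrite (nbnA aA eay).
have R b : b \in ~:A -> deg e b = \sum_(a in A) (e a b : nat).
  rewrite inE => bA; rewrite degE [RHS]big_mkcond /=; apply: eq_bigr => y _.
  rewrite (esym y b); case eby: (e b y); last by case: (y \in A).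
  by rewrite (nbA bA eby).
rewrite (eq_bigr _ L) exchange_big /=; apply: eq_bigr => b hb; by rewrite R.
Qed.

Lemma N2sub p : p \notin A -> N2 p \subset ~:A :\ p.
Proof.
move=> pA; apply/subsetP => q; rewrite !inE => /andP[-> /existsP[a /andP[epa eaq]]].
exact: (nbnA (nbA pA epa) eaq).
Qed.

End Gen.

Section Two.
Variables (V : finType) (e : rel V) (A : {set V}) (n : nat).
Hypothesis esym : symmetric e.
Hypothesis eirr : irreflexive e.
Hypothesis cross : forall x y, e x y -> (x \in A) != (y \in A).
Hypothesis degA : forall x, x \in A -> deg e x = 3.
Hypothesis c4 : forall u w x y, u != w -> x != y -> e u x -> e w x -> e u y -> e w y -> False.
Hypothesis hB : #|~: A| = 2 * n + 2.
Hypothesis degB : forall x, x \notin A -> deg e x = n.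

Definition mateb (p q : V) := (p != q) && ~~ [exists a, e p a && e a q].

Lemma mateb_sym p q : mateb p q = mateb q p.
Proof.
rewrite /mateb eq_sym; congr (_ && ~~ _); apply/existsP/existsP => -[a /andP[h1 h2]];
  exists a; by rewrite esym h2 /= esym h1.
Qed.

Lemma N2card' p : p \notin A -> #|N2 e p| = 2 * n.
Proof. by move=> pA; rewrite (N2card esym cross degA c4 pA) degB. Qed.

Lemma mate_ex p : p \notin A -> exists2 q, q \notin A & mateb p q.
Proof.
move=> pA.
have : N2 e p \proper ~:A :\ p.
  rewrite properEcard (N2sub cross pA) N2card' //.
  have := cardsD1 p (~:A); rewrite hB inE pA /=; lia.
case/properP => _ [q]; rewrite !inE => /andP[qp qA] /nandP[/negPn qp'|nex].
  by rewrite qp' in qp.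
exists q => //; by rewrite /mateb eq_sym qp.
Qed.

Lemma mate_uniq p q r : p \notin A -> q \notin A -> r \notin A ->
  mateb p q -> mateb p r -> q = r.
Proof.
move=> pA qA rA /andP[pq nq] /andP[pr nr]; apply/eqP/negP => /negP qr.
have sub : N2 e p \subset ((~:A :\ p) :\ q) :\ r.
  apply/subsetP => z hz; have := subsetP (N2sub cross pA) z hz.
  move: hz; rewrite !inE => /andP[zp ex] ->; rewrite andbT.
  apply/andP; split; apply/negP => /eqP ez; subst z.
    by rewrite ex in nr.
  by rewrite ex in nq.
have := subset_leq_card sub; rewrite N2card' //.
have := cardsD1 p (~:A); have := cardsD1 q (~:A :\ p); have := cardsD1 r ((~:A :\ p) :\ q).
rewrite hB !inE pA qA rA /= (eq_sym q p) pq (eq_sym r p) pr (eq_sym r q) qr /=.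
lia.
Qed.

Lemma common p q : p != q -> ~~ mateb p q -> exists a, e p a && e a q.
Proof. by move=> pq; rewrite /mateb pq /= negbK => /existsP. Qed.


Lemma nA_neq x y : x \notin A -> y \in A -> (x == y) = false.
Proof. by move=> xA yA; apply: negbTE; apply/eqP => exy; rewrite exy yA in xA. Qed.
Lemma A_neq x y : x \in A -> y \notin A -> (x == y) = false.
Proof. by move=> xA yA; apply: negbTE; apply/eqP => exy; rewrite -exy xA in yA. Qed.

Lemma cyc6 : 2 <= n -> exists c : seq V, [/\ ucycle e c, 3 <= size c & size c = 6].
Proof.
move=> n2.
have : 0 < #|~:A| by rewrite hB; lia.
case/card_gt0P => p; rewrite inE => pA.
have : 1 < deg e p by rewrite degB.
rewrite /deg => /card_gt1P[a1 [a2 [h1 h2 a12]]]; rewrite !inE in h1 h2.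
have a1A := nbA cross pA h1; have a2A := nbA cross pA h2.
have [q hq] : exists q, q \in Nb e a1 :\ p by apply/card_gt0P; rewrite (cardN esym cross degA pA h1).
have /cards2P[r1 [r2 [r12 Hr]]] : #|Nb e a2 :\ p| == 2 by rewrite (cardN esym cross degA pA h2).
have hr1 : r1 \in Nb e a2 :\ p by rewrite Hr !inE eqxx.
have hr2 : r2 \in Nb e a2 :\ p by rewrite Hr !inE eqxx orbT.
move: hq hr1 hr2; rewrite !inE => /andP[qp e1q] /andP[r1p e2r1] /andP[r2p e2r2].
have qA := nbnA cross a1A e1q.
have r1A := nbnA cross a2A e2r1.
have r2A := nbnA cross a2A e2r2.
have qr r : r != p -> e a2 r -> q != r.
  move=> rp e2r; apply/eqP => qr; subst r.
  apply: (c4 (u:=a1) (w:=a2) (x:=p) (y:=q)) => //; try (by rewrite eq_sym); by rewrite esym.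
have [r [b [rp e2r rA qr' /andP[eqb ebr]]]] : exists r b, [/\ r != p, e a2 r, r \notin A, q != r & e q b && e b r].
  case m1: (mateb q r1).
    case m2: (mateb q r2).
      by move: r12; rewrite (mate_uniq qA r1A r2A m1 m2) eqxx.
    have [b /andP[h3 h4]] := common (qr r2 r2p e2r2) (negbT m2).
    by exists r2, b; split => //; [apply: qr | rewrite h3 h4].
  have [b /andP[h3 h4]] := common (qr r1 r1p e2r1) (negbT m1).
  by exists r1, b; split => //; [apply: qr | rewrite h3 h4].
have bA := nbA cross qA eqb.
have ba1 : (a1 == b) = false.
  apply/eqP => ab; subst b.
  apply: (c4 (u:=a1) (w:=a2) (x:=p) (y:=r)) => //; try (by rewrite eq_sym); by rewrite esym.
have ba2 : (b == a2) = false.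
  apply/eqP => ab; subst b.
  apply: (c4 (u:=a1) (w:=a2) (x:=p) (y:=q)) => //; try (by rewrite eq_sym); by rewrite esym.
exists [:: p; a1; q; b; r; a2]; split => //.
rewrite /ucycle /= h1 e1q eqb ebr (esym r) e2r (esym a2) h2 /= !inE.
rewrite (nA_neq pA a1A) (nA_neq pA bA) (nA_neq pA a2A) (A_neq a1A qA) (A_neq a1A rA).
rewrite (nA_neq qA bA) (nA_neq qA a2A) (A_neq bA rA) (nA_neq rA a2A).
rewrite (eq_sym p q) (negbTE qp) (eq_sym p r) (negbTE rp) (negbTE a12) ba1 (negbTE qr') ba2.
done.
Qed.


Lemma part2 : exists (B : {set {set 'I_(2 * n + 3)}}) (x0 : 'I_(2 * n + 3)),
  STS B /\ iso_induced e (@inc_rel (2 * n + 3)) (derived_vertices B x0).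
Proof.
have [z0 z0A] : exists z0, z0 \in ~:A by apply/card_gt0P; rewrite hB; lia.
have lt1 : 2 * n + 2 < 2 * n + 3 by lia.
have le1 : 2 * n + 2 <= 2 * n + 3 by lia.
pose x0 : 'I_(2 * n + 3) := Ordinal lt1.
pose phi (x : V) : 'I_(2 * n + 3) := widen_ord le1 (cast_ord hB (enum_rank_in z0A x)).
have phi_neq x : (phi x == x0) = false.
  apply/negbTE; rewrite -val_eqE /=.
  have := ltn_ord (cast_ord hB (enum_rank_in z0A x)); rewrite /=; lia.
have phi_inj : {in ~:A &, injective phi}.
  move=> x y xA yA /(congr1 val) /= h.
  have h' : enum_rank_in z0A x = enum_rank_in z0A y by apply: val_inj.
  by rewrite -(enum_rankK_in z0A xA) h' (enum_rankK_in z0A yA).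
have phi_surj i : i != x0 -> exists2 x, x \in ~:A & phi x = i.
  move=> ix0.
  have ilt : i < 2 * n + 2.
    have := ltn_ord i; move: ix0; rewrite -val_eqE /=; lia.
  pose j := cast_ord (sym_eq hB) (Ordinal ilt).
  exists (enum_val j); first exact: enum_valP.
  by apply: val_inj; rewrite /= (enum_valK_in z0A).
have phi_eq p q : p \in ~:A -> q \in ~:A -> (phi p == phi q) = (p == q).
  move=> pA qA; apply/eqP/eqP => [|-> //]; exact: phi_inj.
have NbA a : a \in A -> {subset Nb e a <= ~:A}.
  by move=> aA z; rewrite !inE => eaz; apply: (nbnA cross aA eaz).
have memphi x S : x \in ~:A -> {subset S <= ~:A} -> (phi x \in phi @: S) = (x \in S).
  move=> xA SA; apply/imsetP/idP => [[z zS /phi_inj ->] //|xS]; last by exists x.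
  exact: SA.
have x0B1 a : x0 \notin phi @: Nb e a.
  by apply/imsetP => -[z _ /eqP]; rewrite eq_sym phi_neq.
pose sp (pq : V * V) := [set x0; phi pq.1; phi pq.2].
have sp_sym p q : sp (p, q) = sp (q, p).
  by apply/setP => z; rewrite !inE /=; case: (z == x0); case: (z == phi p); case: (z == phi q).
have in_sp z p q : (phi z \in sp (p, q)) = (phi z == phi p) || (phi z == phi q).
  by rewrite !inE phi_neq.
pose MP := [set pq : V * V | [&& pq.1 \notin A, pq.2 \notin A & mateb pq.1 pq.2]].
pose B1 := [set phi @: Nb e a | a in A].
pose B2 := [set sp pq | pq in MP].
pose Bl := B1 :|: B2.
have inB2 p q : p \notin A -> q \notin A -> mateb p q -> sp (p, q) \in Bl.
  move=> pA qA mpq; rewrite inE; apply/orP; right; apply/imsetP; exists (p, q) => //.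
  by rewrite inE /= pA qA mpq.
have inB1 a : a \in A -> phi @: Nb e a \in Bl.
  by move=> aA; rewrite inE; apply/orP; left; apply/imsetP; exists a.
have one x y (T0 : {set 'I_(2 * n + 3)}) : T0 \in Bl -> x \in T0 -> y \in T0 ->
    (forall T, T \in Bl -> x \in T -> y \in T -> T = T0) ->
    #|[set T in Bl | (x \in T) && (y \in T)]| = 1.
  move=> T0B xT0 yT0 H; apply/eqP/cards1P; exists T0; apply/setP => T; rewrite in_set in_set1.
  apply/idP/eqP => [/andP[TB /andP[xT yT]]|->]; first exact: H.
  by rewrite T0B xT0 yT0.
have pair_main x y : x != y -> y != x0 -> #|[set T in Bl | (x \in T) && (y \in T)]| = 1.
  move=> xy yx0; have [q qA eq] := phi_surj y yx0; subst y.
  have qA' : q \notin A by move: qA; rewrite inE.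
  case: (eqVneq x x0) => [-> | xx0].
    have [r rA mqr] := mate_ex qA'.
    apply: (one _ _ (sp (q, r))); rewrite ?inB2 ?inE ?eqxx ?orbT //.
    move=> T; rewrite inE => /orP[/imsetP[a aA ->]|/imsetP[[p' q'] hpq ->]].
      by rewrite (negbTE (x0B1 a)).
    move: hpq; rewrite inE /= => /and3P[p'A q'A m'] _.
    rewrite in_sp !phi_eq ?inE // => /orP[/eqP eq|/eqP eq]; subst.
      by rewrite (mate_uniq qA' q'A rA m' mqr).
    rewrite mateb_sym in m'.
    by rewrite (mate_uniq qA' p'A rA m' mqr) sp_sym.
  have [p pA eq] := phi_surj x xx0; subst x.
  have pA' : p \notin A by move: pA; rewrite inE.
  have pq : p != q by apply: contraNneq xy => ->.
  have combos p' q' : p' \notin A -> q' \notin A -> phi p \in sp (p', q') -> phi q \in sp (p', q') ->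
      (p = p' /\ q = q') \/ (p = q' /\ q = p').
    move=> p'A q'A; rewrite !in_sp !phi_eq ?inE //.
    case/orP => /eqP ep; case/orP => /eqP eq'; auto;
      by move: pq; rewrite ep eq' eqxx.
  case mb: (mateb p q).
    apply: (one _ _ (sp (p, q))); rewrite ?inB2 ?inE ?eqxx ?orbT //.
    move=> T; rewrite inE => /orP[/imsetP[a aA ->]|/imsetP[[p' q'] hpq ->]].
      rewrite !memphi ?inE //; try exact: NbA.
      move=> eap eaq; exfalso; move: mb; rewrite /mateb pq /= => /negP; apply.
      by apply/existsP; exists a; rewrite esym eap eaq.
    move: hpq; rewrite inE /= => /and3P[p'A q'A m'] h1 h2.
    by case: (combos p' q' p'A q'A h1 h2) => -[-> ->] //; rewrite sp_sym.
  have [a /andP[epa eaq]] := common pq (negbT mb).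
  have aA := nbA cross pA' epa.
  apply: (one _ _ (phi @: Nb e a)); rewrite ?inB1 ?memphi ?inE ?(esym a p) ?epa //; try exact: NbA.
  move=> T; rewrite inE => /orP[/imsetP[a' aA' ->]|/imsetP[[p' q'] hpq ->]].
    rewrite !memphi ?inE //; try exact: NbA.
    move=> ea'p ea'q; apply/eqP; apply: contraT => ne.
    exfalso; apply: (c4 (u:=a') (w:=a) (x:=p) (y:=q)) => //; [by apply: contraNneq ne => -> | by rewrite esym].
  move: hpq; rewrite inE /= => /and3P[p'A q'A m'] h1 h2.
  case: (combos p' q' p'A q'A h1 h2) => -[ep eq']; subst.
    by rewrite m' in mb.
  by rewrite mateb_sym m' in mb.
exists Bl, x0; split; first split.
- move=> T; rewrite inE => /orP[/imsetP[a aA ->]|/imsetP[[p q] hpq ->]].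
    rewrite card_in_imset; first by rewrite -(degA aA).
    by move=> u w /(NbA a aA) uA /(NbA a aA) wA; apply: phi_inj.
  move: hpq; rewrite inE /= => /and3P[pA qA /andP[pq _]].
  by rewrite /sp /= cards3 // 1?eq_sym ?phi_neq ?phi_eq ?inE // eq_sym.
- move=> x y xy; case: (eqVneq y x0) => [eyx|yx0]; last exact: pair_main.
  subst y.
  have -> : [set T in Bl | (x \in T) && (x0 \in T)] = [set T in Bl | (x0 \in T) && (x \in T)].
    by apply/setP => T; rewrite !in_set; congr (_ && _); apply: andbC.
  by apply: pair_main; rewrite // eq_sym.
pose h (v : V) : 'I_(2 * n + 3) + {set 'I_(2 * n + 3)} :=
  if v \in A then inr (phi @: Nb e v) else inl (phi v).
exists h; split.
- move=> u w; rewrite /h; case: ifP => uA; case: ifP => wA // [].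
    move=> eqS.
    have Neq : Nb e u = Nb e w.
      apply/setP => z; case zA: (z \in A).
        rewrite !inE; apply/idP/idP => ez.
          by move: (nbnA cross uA ez); rewrite zA.
        by move: (nbnA cross wA ez); rewrite zA.
      rewrite -(memphi _ z (Nb e u)) ?inE ?zA //; last exact: NbA.
      by rewrite eqS memphi ?inE ?zA //; apply: NbA.
    apply/eqP; apply: contraT => uw; exfalso.
    have : 1 < #|Nb e u| by have := degA uA; rewrite /deg => ->.
    case/card_gt1P => x [y [xu yu xy]].
    have xw : x \in Nb e w by rewrite -Neq.
    have yw : y \in Nb e w by rewrite -Neq.
    rewrite !inE in xu yu xw yw.
    by apply: (c4 (u:=u) (w:=w) (x:=x) (y:=y)).
  move=> eq; apply: phi_inj; [by rewrite inE uA | by rewrite inE wA | by apply: val_inj => /=; rewrite eq].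
- apply/setP => -[i|T]; rewrite /derived_vertices inE; apply/imsetP/idP.
  + case=> v _; rewrite /h; case: ifP => // vA [->]; by rewrite phi_neq.
  + move=> ix0; have [v vA <-] := phi_surj i ix0; exists v => //.
    by rewrite /h; move: vA; rewrite inE => /negbTE ->.
  + case=> v _; rewrite /h; case: ifP => // vA [->]; by rewrite inB1 // x0B1.
  + case/andP; rewrite inE => /orP[/imsetP[a aA ->] _|/imsetP[[p q] _ ->]].
      by exists a => //; rewrite /h aA.
    by rewrite !inE eqxx.
- move=> u w; rewrite /h.
  case uA: (u \in A); case wA: (w \in A); rewrite /=.
  + by apply: negbTE; apply/negP => euw; move: (nbnA cross uA euw); rewrite wA.
  + rewrite (memphi _ w (Nb e u)); first by rewrite /Nb inE.
      by rewrite inE wA.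
    exact: NbA.
  + rewrite (memphi _ u (Nb e w)); first by rewrite /Nb inE esym.
      by rewrite inE uA.
    exact: NbA.
  + by apply: negbTE; apply/negP => euw; move: (nbA cross (negbT uA) euw); rewrite wA.
Qed.

End Two.

Lemma edge_neq (V : finType) (e : rel V) a b : irreflexive e -> e a b -> (a == b) = false.
Proof. by move=> irr eab; apply/eqP => ab; rewrite ab irr in eab. Qed.

Lemma c4_of_girth (V : finType) (e : rel V) : simple_graph e -> girth_eq e 6 ->
  forall u w x y, u != w -> x != y -> e u x -> e w x -> e u y -> e w y -> False.
Proof.
move=> [irr sym] [_ gir] u w x y uw xy eux ewx euy ewy.
have : ucycle e [:: u; x; w; y].
  rewrite /ucycle /= eux (sym x w) ewx ewy (sym y u) euy /= !inE.
  rewrite (edge_neq irr eux) (edge_neq irr euy) (negbTE uw) (negbTE xy).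
  rewrite (eq_sym x w) (edge_neq irr ewx) (edge_neq irr ewy).
  done.
by move/gir => /(_ isT).
Qed.

Lemma lower (V : finType) (e : rel V) (n : nat) (A : {set V}) :
  0 < n -> n %% 3 = 2 -> simple_graph e -> girth_eq e 6 ->
  (forall x y, e x y -> (x \in A) != (y \in A)) ->
  (forall x, x \in A -> deg e x = 3) ->
  (forall x, x \notin A -> deg e x = n) ->
  3 * #|V| = (n + 3) * #|~:A| /\ 2 * n + 2 <= #|~:A|.
Proof.
move=> n0 hmod sg gir cross degA degB.
have c4 := c4_of_girth sg gir.
have [irr sym] := sg.
have ec : 3 * #|A| = n * #|~:A|.
  have := dcount sym cross; rewrite (eq_bigr (fun=> 3)) ?sum_nat_const; last exact: degA.
  rewrite (eq_bigr (fun=> n)) ?sum_nat_const; last by move=> x; rewrite inE; apply: degB.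
  by rewrite mulnC (mulnC _ n).
have [p pA] : exists p, p \notin A.
  case: gir => [[c [/andP[cy _] c3 c6]] _].
  case: c cy c3 c6 => [|x [|y s]] //= /andP[exy _] _ _.
  case xA: (x \in A); last by exists x; rewrite xA.
  by exists y; apply: (nbnA cross xA exy).
have h2 := N2card sym cross degA c4 pA.
have := subset_leq_card (N2sub cross pA); rewrite h2 degB //.
have := cardsD1 p (~:A); rewrite inE pA /= => hc hle.
have tot := cardsC A.
have m3 : (n * #|~:A|) %% 3 = 0 by rewrite -ec modnMr.
have m3' : ((n %% 3) * (#|~:A| %% 3)) %% 3 = 0 by rewrite modnMm.
rewrite hmod in m3'.
split; first by rewrite -tot mulnDr ec mulnDl (mulnC 3).
lia.
Qed.

Definition mates_prop (V : finType) (e : rel V) (A : {set V}) :=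
  forall p, p \notin A -> exists p', [/\ p' \notin A, p' != p, ~~ [exists a, e p a && e a p'] &
     forall q, q \notin A -> q != p -> q != p' -> [exists a, e p a && e a q]].

Lemma deg_from_mates (V : finType) (e : rel V) (A : {set V}) n :
  simple_graph e -> (forall x y, e x y -> (x \in A) != (y \in A)) ->
  (forall x, x \in A -> deg e x = 3) ->
  (forall u w x y, u != w -> x != y -> e u x -> e w x -> e u y -> e w y -> False) ->
  #|~:A| = 2 * n + 2 -> mates_prop e A -> forall p, p \notin A -> deg e p = n.
Proof.
move=> [irr sym] cross degA c4 hB mp p pA.
have [p' [p'A p'p nc allc]] := mp p pA.
have eqN : N2 e p = (~:A :\ p) :\ p'.
  apply/setP => z; apply/idP/idP => [hz|].
    have := subsetP (N2sub cross pA) z hz; rewrite !inE => ->; rewrite andbT.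
    apply/eqP => zp'; subst z; move: hz; rewrite inE => /andP[_ ex].
    by rewrite ex in nc.
  rewrite !inE => /and3P[zp' zp zA]; rewrite zp /=; exact: allc.
have := N2card sym cross degA c4 pA; rewrite eqN.
have := cardsD1 p (~:A); have := cardsD1 p' (~:A :\ p).
rewrite hB !inE p'A pA p'p /=.
lia.
Qed.

Lemma build (V : finType) (e : rel V) (A : {set V}) n :
  2 <= n -> simple_graph e -> (forall x y, e x y -> (x \in A) != (y \in A)) ->
  (forall x, x \in A -> deg e x = 3) ->
  (forall u w x y, u != w -> x != y -> e u x -> e w x -> e u y -> e w y -> False) ->
  #|~:A| = 2 * n + 2 -> mates_prop e A -> bb_graph 3 n 6 e.
Proof.
move=> n2 sg cross degA c4 hB mp.
have degB := deg_from_mates sg cross degA c4 hB mp.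
have [irr sym] := sg.
split => //; first by exists A.
split; first exact: (cyc6 sym cross degA c4 hB degB).
move=> c uc c3; exact: (ucycle_ge6 sym cross c4 uc c3).
Qed.

Section Skolem.
Variable k : nat.
Hypothesis k0 : 0 < k.

Definition Ssum x y := if x + y < 2 * k then x + y else x + y - 2 * k.
Definition op x y := if odd (Ssum x y) then (Ssum x y)./2 + k else (Ssum x y)./2.

Lemma opspec x y : x < 2 * k -> y < 2 * k ->
  op x y < 2 * k /\
  ((op x y < k /\ (x + y = 2 * op x y \/ x + y = 2 * op x y + 2 * k)) \/
   (k <= op x y /\ (x + y + 2 * k = 2 * op x y + 1 \/ x + y = 2 * op x y + 1))).
Proof.
move=> hx hy; rewrite /op.
have hs : Ssum x y < 2 * k /\ (Ssum x y = x + y \/ Ssum x y + 2 * k = x + y).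
  rewrite /Ssum; case: ifP; lia.
move: hs; set s := Ssum x y => hs.
have := odd_double_half s; rewrite -muln2.
case: (odd s) => /= h; lia.
Qed.

Lemma opC x y : op x y = op y x.
Proof. by rewrite /op /Ssum addnC. Qed.

Lemma solP x z : x < 2 * k -> z < 2 * k -> exists2 y, y < 2 * k & op x y = z.
Proof.
move=> hx hz.
pose s := if z < k then 2 * z else 2 * (z - k) + 1.
pose y := if x <= s then s - x else s + 2 * k - x.
have hy : y < 2 * k by rewrite /y /s; case: ifP; case: ifP; lia.
exists y => //.
have := opspec hx hy; rewrite /y /s; case: ifP; case: ifP; lia.
Qed.


Definition P := ('I_(2 * k) * 'I_3)%type.
Definition T3 := {t : 'I_3 * 'I_(2 * k) * 'I_(2 * k) | t.1.2 < t.2}.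
Definition Bi := ('I_k + T3)%type.

Definition inb (p : P) (b : Bi) : bool :=
  match b with
  | inl x => nat_of_ord p.1 == nat_of_ord x
  | inr t => ((nat_of_ord p.2 == nat_of_ord (val t).1.1) && ((nat_of_ord p.1 == nat_of_ord (val t).1.2) || (nat_of_ord p.1 == nat_of_ord (val t).2)))
             || ((nat_of_ord p.2 == (nat_of_ord (val t).1.1 + 1) %% 3) && (nat_of_ord p.1 == op (nat_of_ord (val t).1.2) (nat_of_ord (val t).2)))
  end.

Lemma opK x y y' : x < 2 * k -> y < 2 * k -> y' < 2 * k -> op x y = op x y' -> y = y'.
Proof. move=> hx hy hy'; have := opspec hx hy; have := opspec hx hy'; lia. Qed.

Lemma opfix x y : x < 2 * k -> y < 2 * k -> x != y -> op x y = x -> k <= x.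
Proof. move=> hx hy; have := opspec hx hy; lia. Qed.

Lemma levels (i i' : nat) : i < 3 -> i' < 3 -> (i + 1) %% 3 != i /\ (i' + 1) %% 3 != i' /\ (i = i' -> (i + 1) %% 3 = (i' + 1) %% 3) /\
     (i != i' -> ((i + 1) %% 3 == i') && ((i' + 1) %% 3 != i) || ((i' + 1) %% 3 == i) && ((i + 1) %% 3 != i')).
Proof. by case: i => [|[|[|]]] //; case: i' => [|[|[|]]]. Qed.

Lemma core (i i' j j' x y x' y' o o' a c l l' : nat) :
  x < y -> x' < y' -> ~~ ((a == c) && (l == l')) ->
  j != i -> j' != i' -> (i = i' -> j = j') ->
  (i != i' -> (j == i') && (j' != i) || (j' == i) && (j != i')) ->
  (l == i) && ((a == x) || (a == y)) || (l == j) && (a == o) ->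
  (l' == i) && ((c == x) || (c == y)) || (l' == j) && (c == o) ->
  (l == i') && ((a == x') || (a == y')) || (l == j') && (a == o') ->
  (l' == i') && ((c == x') || (c == y')) || (l' == j') && (c == o') ->
  (o = o' -> x = x' -> y = y') ->
  (o = o' -> x = y' -> y = x') ->
  (o = o' -> y = x' -> x = y') ->
  (o = o' -> y = y' -> x = x') ->
  i = i' /\ x = x' /\ y = y'.
Proof.
move=> h1 h2 pq l1 l2 l3 l4 hp hq hp' hq' C1 C2 C3 C4.
move: hp hq hp' hq'; rewrite !andb_orr -!orbA.
move=> hp hq hp' hq'.
case/or3P: hp => /andP[/eqP ? /eqP ?]; case/or3P: hq => /andP[/eqP ? /eqP ?];
  case/or3P: hp' => /andP[/eqP ? /eqP ?]; case/or3P: hq' => /andP[/eqP ? /eqP ?]; subst; lia.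
Qed.

Lemma Uniq (p q : P) (b b' : Bi) : p != q -> inb p b -> inb q b -> inb p b' -> inb q b' -> b = b'.
Proof.
case: p q => [a l] [c l']; rewrite xpair_eqE -!val_eqE.
have := ltn_ord a; have := ltn_ord l; have := ltn_ord c; have := ltn_ord l'.
case: b b' => [x|[[[i x] y] hxy]] [x'|[[[i' x'] y'] hxy']] /=.
- move=> *; congr inl; apply: val_inj => /=; lia.
- have := ltn_ord x; have := ltn_ord i'; have hx := ltn_ord x'; have hy := ltn_ord y'.
  have f1 := opfix hx hy; have f2 := opfix hy hx; rewrite opC in f2.
  move: hxy' f1 f2; rewrite /= => *; exfalso; lia.
- have := ltn_ord x'; have := ltn_ord i; have hx := ltn_ord x; have hy := ltn_ord y.
  have f1 := opfix hx hy; have f2 := opfix hy hx; rewrite opC in f2.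
  move: hxy f1 f2; rewrite /= => *; exfalso; lia.
- have hx := ltn_ord x; have hy := ltn_ord y; have hx' := ltn_ord x'; have hy' := ltn_ord y'.
  have C1 : op x y = op x' y' -> nat_of_ord x = x' -> nat_of_ord y = y'.
    by move=> h ex; apply: (opK hx hy hy'); rewrite h ex.
  have C2 : op x y = op x' y' -> nat_of_ord x = y' -> nat_of_ord y = x'.
    by move=> h ex; apply: (opK hx hy hx'); rewrite h ex opC.
  have C3 : op x y = op x' y' -> nat_of_ord y = x' -> nat_of_ord x = y'.
    by move=> h ex; apply: (opK hy hx hy'); rewrite opC h ex.
  have C4 : op x y = op x' y' -> nat_of_ord y = y' -> nat_of_ord x = x'.
    by move=> h ex; apply: (opK hy hx hx'); rewrite opC h ex opC.
  have := ltn_ord i; have := ltn_ord i'.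
  move: hxy hxy'; rewrite /= => hxy hxy' hi hi' ? ? ? ? pq hp hq hp' hq'.
  have [l1 [l2 [l3 l4]]] := levels hi' hi.
  have [e1 [e2 e3]] : nat_of_ord i = i' /\ nat_of_ord x = x' /\ nat_of_ord y = y'.
    apply: (core (j := (i + 1) %% 3) (j' := (i' + 1) %% 3) (o := op x y) (o' := op x' y')
       hxy hxy' pq l1 l2 l3 l4 hp hq hp' hq' C1 C2 C3 C4).
  congr inr; apply: val_inj => /=.
  by rewrite (val_inj e1) (val_inj e2) (val_inj e3).
Qed.

End Skolem.

Section SkG.
Variable k : nat.
Hypothesis k0 : 0 < k.

Definition VS := (P k + Bi k)%type.
Definition eS (u w : VS) : bool :=
  match u, w with
  | inl p, inr b => inb p b
  | inr b, inl p => inb p b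
  | _, _ => false
  end.
Definition AS : {set VS} := [set v | if v is inr _ then true else false].

Lemma simpleS : simple_graph eS.
Proof. by split; [case | case=> [p|b] [q|c]]. Qed.

Lemma crossS x y : eS x y -> (x \in AS) != (y \in AS).
Proof. by case: x => [p|b]; case: y => [q|c]; rewrite !inE. Qed.

Lemma cardS : #|~: AS| = 6 * k.
Proof.
have -> : ~: AS = inl @: [set: P k].
  apply/setP => -[p|b]; rewrite !inE.
    by apply/esym/imsetP; exists p; rewrite ?inE.
  by apply/esym/imsetP => -[q _].
rewrite card_imset; last by move=> ? ? [].
by rewrite cardsT card_prod !card_ord; lia.
Qed.

Lemma degpts b : deg eS (inr b) = #|[set p | inb p b]|.
Proof.
have E : [set y | eS (inr b) y] = inl @: [set p | inb p b].
  apply/setP => -[q|c]; rewrite !inE /=.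
    apply/idP/imsetP => [h|[q' h [->]]]; first by exists q; rewrite ?inE.
    by move: h; rewrite inE.
  by apply/esym/imsetP => -[? _].
by rewrite /deg E card_imset //; exact: inl_inj.
Qed.

Lemma deg3S b : deg eS (inr b) = 3.
Proof.
rewrite degpts; case: b => [x|[[[i x] y] hxy]].
  have hx : x < 2 * k by have := ltn_ord x; lia.
  pose p0 : P k := (Ordinal hx, @Ordinal 3 0 isT).
  pose p1 : P k := (Ordinal hx, @Ordinal 3 1 isT).
  pose p2 : P k := (Ordinal hx, @Ordinal 3 2 isT).
  have -> : [set p | inb p (inl x)] = [set p0; p1; p2].
    apply/setP => -[a l]; rewrite !inE /= !xpair_eqE -!val_eqE /=.
    move: (ltn_ord l) => hl; apply/idP/idP; lia.
  by rewrite cards3 // xpair_eqE -!val_eqE /= andbF.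
have ho : op k x y < 2 * k by case: (opspec k0 (ltn_ord x) (ltn_ord y)).
have hs : (i + 1) %% 3 < 3 by rewrite ltn_mod.
pose p0 : P k := (x, i).
pose p1 : P k := (y, i).
pose p2 : P k := (Ordinal ho, Ordinal hs).
have -> : [set p | inb p (inr (exist _ (i, x, y) hxy))] = [set p0; p1; p2].
  apply/setP => -[a l]; rewrite !inE /= !xpair_eqE -!val_eqE /=.
  by apply/idP/idP; lia.
have := ltn_ord i; move: hxy => /= hxy hi.
rewrite cards3 // xpair_eqE -!val_eqE /=; lia.
Qed.


Lemma c4S u w x y : u != w -> x != y -> eS u x -> eS w x -> eS u y -> eS w y -> False.
Proof.
case: u => [p|b]; case: w => [q|b']; case: x => [r|c]; case: y => [s|d] //=.
  move=> pq cd h1 h2 h3 h4.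
  by move: cd; rewrite (Uniq k0 pq h1 h2 h3 h4) eqxx.
move=> bb rs h1 h2 h3 h4.
by move: bb; rewrite (Uniq k0 rs h1 h3 h2 h4) eqxx.
Qed.

Lemma mk3P (i : 'I_3) (x y : 'I_(2 * k)) (p q : P k) : nat_of_ord x != y ->
  let f (r : P k) := ((nat_of_ord r.2 == i) && ((nat_of_ord r.1 == x) || (nat_of_ord r.1 == y)))
      || ((nat_of_ord r.2 == (i + 1) %% 3) && (nat_of_ord r.1 == op k x y)) in
  f p -> f q -> exists b, inb p b && inb q b.
Proof.
move=> xy f fp fq; case: (ltngtP x y) => hxy; last by rewrite hxy eqxx in xy.
  by exists (inr (exist _ (i, x, y) hxy)); move: fp fq; rewrite /f /= => -> ->.
exists (inr (exist _ (i, y, x) hxy)); move: fp fq; rewrite /f /= opC.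
move=> h1 h2; apply/andP; split; lia.
Qed.

Definition mate1 (a : nat) := if k <= a then a - k else a + k.
Definition matel (a l : nat) := (l + (if k <= a then 1 else 2)) %% 3.
Lemma mate1_lt (p : P k) : mate1 p.1 < 2 * k.
Proof. have := ltn_ord p.1; rewrite /mate1; case: ifP; lia. Qed.
Lemma matel_lt (p : P k) : matel p.1 p.2 < 3.
Proof. by rewrite /matel ltn_mod. Qed.
Definition mateP (p : P k) : P k := (Ordinal (mate1_lt p), Ordinal (matel_lt p)).

Lemma mate_neq p : mateP p != p.
Proof.
case: p => a l; rewrite /mateP xpair_eqE -!val_eqE /= /matel.
have := ltn_ord l; case: ifP; lia.
Qed.

Lemma nomate p b : ~~ (inb p b && inb (mateP p) b).
Proof.
case: p => a l; have := ltn_ord a; have := ltn_ord l.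
case: b => [x|[[[i x] y] hxy]] /=; rewrite /mate1 /matel.
  by case: ifP; lia.
have := opspec k0 (ltn_ord x) (ltn_ord y); have := ltn_ord i; move: hxy => /= hxy.
have := ltn_ord x; have := ltn_ord y.
case: ifP => ha; lia.
Qed.

Lemma cover p q : p != q -> q != mateP p -> exists b, inb p b && inb q b.
Proof.
case: p q => [a l] [c l']; rewrite /mateP !xpair_eqE -!val_eqE /= /mate1 /matel.
have ha := ltn_ord a; have hl := ltn_ord l; have hc := ltn_ord c; have hl' := ltn_ord l'.
move=> pq qm.
case: (eqVneq (nat_of_ord l') l) => [el | nl].
  apply: (mk3P (i := l) (x := a) (y := c)) => /=; lia.
case: (eqVneq (nat_of_ord l') ((l + 1) %% 3)) => [el1 | nl1].
  have [y hy opy] := solP k0 (ltn_ord a) (ltn_ord c).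
  case: (eqVneq y (nat_of_ord a)) => [ya | ya].
    subst y; have := opspec k0 (ltn_ord a) (ltn_ord a); rewrite opy => sp.
    case: (ltnP a k) => ak.
      by exists (inl (Ordinal ak)); rewrite /=; lia.
    by exfalso; move: qm; rewrite ak; lia.
  apply: (mk3P (i := l) (x := a) (y := Ordinal hy)) => /=; rewrite ?opy; lia.
have el2 : nat_of_ord l = (l' + 1) %% 3 by lia.
have [y hy opy] := solP k0 (ltn_ord c) (ltn_ord a).
case: (eqVneq y (nat_of_ord c)) => [yc | yc].
  subst y; have := opspec k0 (ltn_ord c) (ltn_ord c); rewrite opy => sp.
  case: (ltnP c k) => ck.
    by exists (inl (Ordinal ck)); rewrite /=; lia.
  exfalso; move: qm; have -> : k <= a = false by lia.
  lia.
apply: (mk3P (i := l') (x := c) (y := Ordinal hy)) => /=; rewrite ?opy; lia.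
Qed.

Lemma matesS : mates_prop eS AS.
Proof.
move=> [p|b]; rewrite inE // => _.
exists (inl (mateP p)); split.
- by rewrite inE.
- by rewrite /= mate_neq.
- apply/existsP => -[[q|b] /andP[h1 h2]] //.
  by move: h1 h2 => /= h1 h2; move: (nomate p b); rewrite h1 h2.
- move=> [q|b]; rewrite inE // => _ qp qm.
  move: qp qm => /= qp qm.
  have pq : p != q by rewrite eq_sym.
  have [b /andP[h1 h2]] := cover pq qm.
  by apply/existsP; exists (inr b); rewrite /= h1 h2.
Qed.

End SkG.

Lemma skolem_graph n : 0 < n -> n %% 3 = 2 -> exists (V : finType) (e : rel V) (A : {set V}),
  [/\ simple_graph e, (forall x y, e x y -> (x \in A) != (y \in A)),
      (forall x, x \in A -> deg e x = 3),
      (forall u w x y, u != w -> x != y -> e u x -> e w x -> e u y -> e w y -> False)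
    & #|~:A| = 2 * n + 2 /\ mates_prop e A].
Proof.
move=> hn hmod.
pose k := (n + 1) %/ 3.
have k0 : 0 < k by rewrite /k; lia.
have hk : 6 * k = 2 * n + 2 by rewrite /k; lia.
exists (VS k), (@eS k), (@AS k); split.
- exact: simpleS.
- exact: crossS.
- move=> [p|b]; rewrite inE // => _; exact: deg3S.
- by move=> u w x y; apply: c4S.
- by split; [rewrite cardS | apply: matesS].
Qed.

Theorem mainTheorem2 (n : nat) (hn : 0 < n) (hmod : n %% 3 = 2) :
  (exists (V : finType) (e : rel V),
      bb_cage 3 n 6 e /\ 3 * #|V| = 3 * (2 + 2 * n) + (2 + 2 * n) * n) /\
  (forall (V : finType) (e : rel V), bb_cage 3 n 6 e ->
     exists (B : {set {set 'I_(2 * n + 3)}}) (x0 : 'I_(2 * n + 3)),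
       STS B /\ iso_induced e (@inc_rel (2 * n + 3)) (derived_vertices B x0)).
Proof.
have n2 : 2 <= n by lia.
have [V0 [e0 [A0 [sg0 cross0 degA0 c40 [hB0 mp0]]]]] := skolem_graph hn hmod.
have bb0 := build n2 sg0 cross0 degA0 c40 hB0 mp0.
have degB0 := deg_from_mates sg0 cross0 degA0 c40 hB0 mp0.
have [gir0 _] : girth_eq e0 6 /\ True by case: bb0.
have [ord0 _] := lower hn hmod sg0 (let: And3 _ _ g := bb0 in g) cross0 degA0 degB0.
rewrite hB0 in ord0.
have minV (W : finType) (f : rel W) : bb_graph 3 n 6 f -> 3 * #|W| >= (n + 3) * (2 * n + 2).
  case=> sg [A [cr dA dB]] gir.
  have [-> hb] := lower hn hmod sg gir cr dA dB.
  by rewrite leq_mul2l hb orbT.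
split.
  exists V0, e0; split; last by rewrite ord0; nia.
  split => // W f bbW; have := minV W f bbW; rewrite -ord0 leq_mul2l /=.
  done.
move=> V e [[sg [A [cr dA dB]] gir] minC].
have [ordV hb] := lower hn hmod sg gir cr dA dB.
have le := minC V0 e0 bb0.
have hB : #|~:A| = 2 * n + 2.
  apply/eqP; rewrite eqn_leq hb andbT.
  have : (n + 3) * #|~:A| <= (n + 3) * (2 * n + 2) by rewrite -ordV -ord0 leq_mul2l le orbT.
  by rewrite leq_mul2l /= addn3.
have [irr sym] := sg.
exact: (part2 sym cr dA (c4_of_girth sg gir) hB dB).
Qed.
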